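(* Let $\hat T$ be a virtual tree with $n$ vertices (each vertex $v$ having current children $C(v)$, $|C(v)|\le 2$, and appended children $A(v)$, $|A(v)|\le 2$) stored in an energy-bound light-first order. Then local messaging in $\hat T$ — where in a local broadcast each vertex (1) sends its message to its current children and (2) unless it is the root, waits until it receives the message from its parent and propagates it to its appended children, and local reduce is defined analogously with reduction — takes $O(n)$ total energy and $O(\log n)$ depth.
   Context: Processors sit on the cells of a 2D grid enumerated by a space-filling curve $K$; sending a message costs energy equal to the Manhattan distance between sender and receiver; depth is the number of parallel communication rounds. Each vertex is stored in one processor at position $p_v$. For a rooted tree, $s(v)$ is the size of the subtree rooted at $v$; the tree is in ($K$-)light-first order if for every vertex $v$ its children can be indexed $u_1,\dots,u_m$ with $s(u_1)\le\dots\le s(u_m)$ so that $u_i$ is at position $p_v+1+\sum_{j<i}s(u_j)$. A light-first order is energy-bound if, for every rooted tree with degree bounded by a constant and $n$ vertices stored in it, the total energy of every vertex sending one message to each of its children is $O(n)$. A virtual tree is a rooted tree in which the children of each vertex $v$ are split into an ordered list $C(v)$ of current children followed by an ordered list $A(v)$ of appended children (as produced from an arbitrary-degree tree by recursively regrouping children: $C(v)=(c_1,\dots,c_d)$ becomes $(c_1,c_{\lfloor d/2\rfloor+1})$ with $A(c_1)=(c_2,\dots,c_{\lfloor d/2\rfloor})$, $A(c_{\lfloor d/2\rfloor+1})=(c_{\lfloor d/2\rfloor+2},\dots,c_d)$, and likewise for $A(v)$). Local broadcast: each vertex's message is delivered to all its children. Local reduce: each vertex receives the reduction, under an associative operation,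 of messages from its children. *)

(* Defs.v *)
From mathcomp Require Import all_boot.
Set Implicit Arguments. Unset Strict Implicit. Unset Printing Implicit Defensive.

(* A space-filling curve K enumerates grid cells: position i |-> cell K i. *)
Definition absdiff (m n : nat) : nat := (m - n) + (n - m).
Definition mdist (a b : nat * nat) : nat := absdiff a.1 b.1 + absdiff a.2 b.2.

Section Trees.
Variable V : finType.

(* Every non-root vertex is a child of exactly one vertex,
   the root of none, and every vertex is reachable from the root. *)
Definition child_rel (ch : V -> seq V) : rel V := fun x y => y \in ch x.

Definition is_rooted_tree (ch : V -> seq V) (r : V) : Prop :=
  perm_eq (flatten [seq ch v | v <- enum V]) [seq v <- enum V | v != r]
  /\ forall v, connect (child_rel ch) r v.

Definition subtree_size (ch : V -> seq V) (v : V) : nat :=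
  #|[set u | connect (child_rel ch) v u]|.

Definition light_first (ch : V -> seq V) (p : V -> nat) : Prop :=
  forall v, exists us : seq V,
    [/\ perm_eq us (ch v),
        sorted (fun a b => subtree_size ch a <= subtree_size ch b) us &
        forall i, i < size us ->
          p (nth v us i) = p v + 1 + \sum_(j < i) subtree_size ch (nth v us j)].

Definition tree_energy (K : nat -> nat * nat) (ch : V -> seq V) (p : V -> nat) : nat :=
  \sum_(v : V) \sum_(u <- ch v) mdist (K (p v)) (K (p u)).

(* A list (c_1,...,c_d) is replaced by (c_1, c_{floor(d/2)+1}) (just (c_1)
   when d = 1), with appended lists
   A(c_1) = (c_2,...,c_{floor(d/2)}),  A(c_{floor(d/2)+1}) = (c_{floor(d/2)+2},...,c_d). *)
Definition vheads (L : seq V) : seq V :=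
  match L with
  | [::] => [::]
  | x :: _ => if size L == 1 then [:: x] else [:: x; nth x L (size L)./2]
  end.

Definition regroup_ok (LA : V -> seq V) (L : seq V) : Prop :=
  match L with
  | [::] => True
  | x :: _ => LA x = take ((size L)./2 - 1) (behead L)
              /\ LA (nth x L (size L)./2) = drop ((size L)./2).+1 L
  end.

(* (C, A) is the virtual tree produced from the tree (ch, r): LA v is the
   (not yet regrouped) list of vertices appended to v. *)
Definition virtual_tree_of (ch : V -> seq V) (r : V) (C A : V -> seq V) : Prop :=
  exists LA : V -> seq V, LA r = [::] /\
    forall v, [/\ C v = vheads (ch v), A v = vheads (LA v),
                  regroup_ok LA (ch v) & regroup_ok LA (LA v)].

(* A schedule is a list of messages (round, sender, receiver). *)
Definition sched_energy (K : nat -> nat * nat) (p : V -> nat)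
    (s : seq (nat * V * V)) : nat :=
  \sum_(m <- s) mdist (K (p m.1.2)) (K (p m.2)).
Definition sched_depth (s : seq (nat * V * V)) : nat := \max_(m <- s) m.1.1.

Variables C A : V -> seq V.
Definition vch (v : V) : seq V := C v ++ A v.
Definition vparent (u : V) : option V := [pick v | u \in vch v].

(* Local broadcast: round in which u receives its parent's message. *)
Fixpoint brnd (fuel : nat) (u : V) : nat :=
  match fuel with
  | 0 => 0
  | f.+1 => match vparent u with
            | None => 0
            | Some v => if u \in C v then 1 else (brnd f v).+1
            end
  end.

(* Local reduce: a vertex waits for the partial reductions of its appended
   children, reduces them with its own message, and sends the result to its
   parent; rrnd u is the round in which u sends. *)
Fixpoint rrnd (fuel : nat) (u : V) : nat :=
  match fuel with
  | 0 => 0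
  | f.+1 => (\max_(w <- A u) rrnd f w).+1
  end.

Definition bcast_sched : seq (nat * V * V) :=
  [seq (brnd #|V| u, v, u) | v <- enum V, u <- vch v].
Definition reduce_sched : seq (nat * V * V) :=
  [seq (rrnd #|V| u, u, v) | v <- enum V, u <- vch v].

End Trees.

Definition energy_bound (K : nat -> nat * nat) : Prop :=
  forall D : nat, exists c : nat,
    forall (V : finType) (ch : V -> seq V) (r : V) (p : V -> nat),
      is_rooted_tree ch r -> (forall v, size (ch v) <= D) ->
      light_first ch p -> tree_energy K ch p <= c * #|V|.

(* Main.v *)
Require Import Defs.
From mathcomp Require Import all_boot zify.
Set Implicit Arguments. Unset Strict Implicit. Unset Printing Implicit Defensive.

Section Gen.
Variable V : finType.
Implicit Types (LA : V -> seq V) (L : seq V).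

Lemma decomp LA L : regroup_ok LA L -> L = flatten [seq h :: LA h | h <- vheads L].
Proof.
case: L => [|x [|y t]] //=.
  by case=> -> _.
rewrite -/(size t).+2./2 /= => [[H1 H2]].
rewrite cats0 H1 H2 /= subn1 /=.
have Hk : (size t)./2 < size (y :: t).
  have := odd_double_half (size t); rewrite /=; lia.
by rewrite -(drop_nth x Hk) cat_take_drop.
Qed.

Lemma halving LA L h : regroup_ok LA L -> h \in vheads L -> (size (LA h)).*2 < size L.
Proof.
case: L => [|x [|y t]] //=.
  by case=> H1 _; rewrite inE => /eqP ->; rewrite H1.
rewrite -/(size t).+2./2 /= => [[H1 H2]].
rewrite !inE => /orP [] /eqP ->.
  rewrite H1 size_take /= subn1 /=.
  have := odd_double_half (size t).
  move=> E; rewrite ifT; lia.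
rewrite H2 /= size_drop /=.
have := odd_double_half (size t); lia.
Qed.

Lemma size_vheads L : size (vheads L) <= 2.
Proof. by case: L => [|x t] //=; case: ifP. Qed.

Lemma reg_ind LA (P : V -> Prop) :
  (forall v, regroup_ok LA (LA v)) ->
  (forall h, P h -> forall h', h' \in vheads (LA h) -> P h') ->
  forall L, regroup_ok LA L -> (forall h, h \in vheads L -> P h) ->
  forall u, u \in L -> P u.
Proof.
move=> RLA Hcl L; move: {2}(size L) (leqnn (size L)) => n.
elim: n L => [|n IH] L.
  by rewrite leqn0 => /nilP ->.
move=> Hs HL Hh u; rewrite {1}(decomp HL) => /flattenP [s /mapP [h hin ->]].
rewrite inE => /orP [/eqP -> | uin]; first exact: Hh.
apply: (IH (LA h)) => //.
  have := halving HL hin; lia.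
exact: Hcl (Hh h hin).
Qed.

Lemma size_sum LA L : regroup_ok LA L -> size L = \sum_(h <- vheads L) (size (LA h)).+1.
Proof.
move=> HL; rewrite {1}(decomp HL).
elim: (vheads L) => [|h s IH]; first by rewrite big_nil.
by rewrite big_cons /= size_cat IH.
Qed.

Lemma big_flat (F : V -> seq V) (G : V -> nat) s :
  \sum_(x <- flatten [seq F v | v <- s]) G x = \sum_(v <- s) \sum_(x <- F v) G x.
Proof. elim: s => [|v s IH]; first by rewrite !big_nil. by rewrite /= big_cat IH big_cons. Qed.

Lemma subset_perm (s t : seq V) : uniq s -> {subset s <= t} -> exists t', perm_eq t (s ++ t').
Proof.
elim: s t => [|x s IH] t /=.
  by move=> _ _; exists t.
case/andP=> xs us sub.
have xt : x \in t by apply: sub; rewrite inE eqxx.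
have [t' Ht'] : exists t', perm_eq (rem x t) (s ++ t').
  apply: IH => // y ys; apply: rem_mem; last by apply: sub; rewrite inE ys orbT.
  by apply: contraNneq xs => <-.
exists t'; apply: perm_trans (perm_to_rem xt) _.
by rewrite perm_cons.
Qed.

End Gen.
Section VT.
Variables (V : finType) (ch C A LA : V -> seq V) (r : V).
Hypothesis Hperm : perm_eq (flatten [seq ch v | v <- enum V]) [seq v <- enum V | v != r].
Hypothesis Hconn : forall v, connect (child_rel ch) r v.
Hypothesis LAr : LA r = [::].
Hypothesis HC : forall v, C v = vheads (ch v).
Hypothesis HA : forall v, A v = vheads (LA v).
Hypothesis Rch : forall v, regroup_ok LA (ch v).
Hypothesis RLA : forall v, regroup_ok LA (LA v).

Lemma size_in_flat (F : V -> seq V) s v : v \in s -> size (F v) <= size (flatten [seq F w | w <- s]).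
Proof.
elim: s => [|w s IH] //=; rewrite inE size_cat => /orP [/eqP -> | /IH]; lia.
Qed.

Lemma size_ch v : size (ch v) <= #|V|.
Proof.
apply: leq_trans (size_in_flat ch (mem_enum _ v)) _.
by rewrite (perm_size Hperm) size_filter cardE count_size.
Qed.

Lemma in_ch u : u != r -> exists v, u \in ch v.
Proof.
move=> ur.
have : u \in [seq v <- enum V | v != r] by rewrite mem_filter ur mem_enum.
rewrite -(perm_mem Hperm) => /flattenP [s /mapP [v _ ->]] us; by exists v.
Qed.

Lemma LA_small u : size (LA u) < #|V|.
Proof.
have [->|ur] := eqVneq u r; first by rewrite LAr /=; apply/card_gt0P; exists r.
have [v uv] := in_ch ur.
apply: (reg_ind (P := fun u => size (LA u) < #|V|) RLA _ (Rch v)) uv.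
  move=> h Ph h' /(halving (RLA h)); lia.
move=> h /(halving (Rch v)); have := size_ch v; lia.
Qed.

Lemma connect_vch v : connect (child_rel (vch C A)) r v.
Proof.
apply: (connect_sub _ (Hconn v)) => x y yx.
apply: (reg_ind (P := fun u => connect (child_rel (vch C A)) x u) RLA _ (Rch x)) yx.
  move=> h Ph h' h'in; apply: connect_trans Ph (connect1 _).
  by rewrite /child_rel /vch mem_cat HA h'in orbT.
by move=> h hin; apply: connect1; rewrite /child_rel /vch mem_cat HC hin.
Qed.

Definition M := flatten [seq vch C A v | v <- enum V].

Lemma inM u : u != r -> u \in M.
Proof.
move=> ur; have [v uv] := in_ch ur.
apply: (reg_ind (P := fun u => u \in M) RLA _ (Rch v)) uv.
  move=> h _ h' h'in; apply/flattenP; exists (vch C A h); first exact: map_f (mem_enum _ _).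
  by rewrite /vch mem_cat HA h'in orbT.
move=> h hin; apply/flattenP; exists (vch C A v); first exact: map_f (mem_enum _ _).
by rewrite /vch mem_cat HC hin.
Qed.

Definition W (s : seq V) := \sum_(x <- s) (size (LA x)).+1.

Lemma W_M : W M = size [seq v <- enum V | v != r] + \sum_(v <- enum V) size (LA v).
Proof.
rewrite /W /M big_flat.
rewrite (eq_bigr (fun v => size (ch v) + size (LA v))); last first.
  by move=> v _; rewrite /vch big_cat /= HC HA -!size_sum.
rewrite big_split /= -(perm_size Hperm).
congr (_ + _).
elim: (enum V) => [|v s IH]; first by rewrite big_nil.
by rewrite big_cons /= size_cat IH.
Qed.

Lemma W_N : W [seq v <- enum V | v != r] = size [seq v <- enum V | v != r] + \sum_(v <- enum V) size (LA v).
Proof.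
rewrite /W big_filter [X in _ = _ + X](bigID (fun v => v != r)) /=.
rewrite [X in _ = _ + (_ + X)]big1; last by move=> v; rewrite negbK => /eqP ->; rewrite LAr.
rewrite addn0 size_filter.
elim: (enum V) => [|v s IH]; first by rewrite !big_nil.
rewrite !big_cons /=; case: ifP => _ /=; rewrite ?IH; lia.
Qed.

Lemma perm_vch : perm_eq M [seq v <- enum V | v != r].
Proof.
have sub : {subset [seq v <- enum V | v != r] <= M}.
  by move=> u; rewrite mem_filter => /andP [ur _]; apply: inM.
have [t Ht] := subset_perm (filter_uniq _ (enum_uniq V)) sub.
have : W M = W [seq v <- enum V | v != r] by rewrite W_M W_N.
rewrite {1}/W (perm_big _ Ht) big_cat /= -/(W _).
case: t Ht => [|x t] Ht; first by rewrite cats0 in Ht.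
rewrite big_cons; lia.
Qed.

Lemma vch_tree : is_rooted_tree (vch C A) r.
Proof. split; [exact: perm_vch | exact: connect_vch]. Qed.

Lemma vch_deg v : size (vch C A v) <= 4.
Proof. rewrite /vch size_cat HC HA; have := size_vheads (ch v); have := size_vheads (LA v); lia. Qed.

Lemma brnd_bound f u : 0 < brnd C A f u -> (size (LA u)).+1 * 2 ^ (brnd C A f u).-1 <= #|V|.
Proof.
elim: f u => [|f IH] u //=.
rewrite /vparent; case: pickP => [v Hv | _] //=.
case: ifP => HuC _.
  by rewrite muln1; apply: LA_small.
have HuA : u \in vheads (LA v) by move: Hv; rewrite /vch mem_cat HuC -HA.
have Hh := halving (RLA v) HuA.
case E: (brnd C A f v) => [|b] /=.
  by rewrite muln1; apply: LA_small.
have := IH v; rewrite E /= => /(_ isT).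
rewrite expnS.
set e := 2 ^ b; nia.
Qed.

Lemma brnd_log f u : brnd C A f u <= (trunc_log 2 #|V|).+1.
Proof.
case E: (brnd C A f u) => [|b] //.
have := @brnd_bound f u; rewrite E /= => /(_ isT) H.
rewrite ltnS; apply: trunc_log_max => //.
apply: leq_trans H; rewrite leq_pmull //.
Qed.

Lemma rrnd_bound f u : rrnd A f u <= (trunc_log 2 (size (LA u)).+1).+1.
Proof.
elim: f u => [|f IH] u //=.
rewrite ltnS big_seq; apply: (big_ind (fun x => x <= _)) => //.
  by move=> x y; rewrite geq_max => ->.
move=> w; rewrite HA => win.
apply: leq_trans (IH w) _.
rewrite -trunc_log2_double //.
apply: leq_trunc_log.
have := halving (RLA u) win; lia.
Qed.

Lemma rrnd_log f u : rrnd A f u <= (trunc_log 2 #|V|).+1.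
Proof.
apply: leq_trans (rrnd_bound f u) _; rewrite ltnS; apply: leq_trunc_log; exact: LA_small.
Qed.
End VT.

Lemma mdistC a b : mdist a b = mdist b a.
Proof. by rewrite /mdist /absdiff (addnC (a.1 - b.1)) (addnC (a.2 - b.2)). Qed.

Theorem mainTheorem6 (K : nat -> nat * nat) (Kinj : injective K)
    (HK : energy_bound K) :
  exists c : nat,
    forall (V : finType) (ch C A : V -> seq V) (r : V) (p : V -> nat),
      is_rooted_tree ch r ->
      virtual_tree_of ch r C A ->
      light_first (vch C A) p ->
      [/\ sched_energy K p (bcast_sched C A) <= c * #|V|,
          sched_depth (bcast_sched C A) <= c * (trunc_log 2 #|V|).+1,
          sched_energy K p (reduce_sched C A) <= c * #|V| &
          sched_depth (reduce_sched C A) <= c * (trunc_log 2 #|V|).+1].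
Proof.
have [c1 Hc1] := HK 4.
exists c1.+1 => V ch C A r p [Hperm Hconn] [LA [LAr HV]] Hlf.
have HC v : C v = vheads (ch v) by case: (HV v).
have HA v : A v = vheads (LA v) by case: (HV v).
have Rch v : regroup_ok LA (ch v) by case: (HV v).
have RLA v : regroup_ok LA (LA v) by case: (HV v).
have Htree := vch_tree Hperm Hconn LAr HC HA Rch RLA.
have HE := Hc1 V (vch C A) r p Htree (vch_deg Hperm HC HA) Hlf.
have Hcn : c1 * #|V| <= c1.+1 * #|V| by rewrite leq_mul2r leqnSn orbT.
have Hdl x : x <= (trunc_log 2 #|V|).+1 -> x <= c1.+1 * (trunc_log 2 #|V|).+1.
  by move=> H; apply: leq_trans H _; rewrite leq_pmull.
have Ebc : sched_energy K p (bcast_sched C A) = tree_energy K (vch C A) p.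
  by rewrite /sched_energy /bcast_sched big_allpairs_dep /= /tree_energy big_enum.
have Erd : sched_energy K p (reduce_sched C A) = tree_energy K (vch C A) p.
  rewrite /sched_energy /reduce_sched big_allpairs_dep /= /tree_energy big_enum /=.
  by apply: eq_bigr => v _; apply: eq_bigr => u _; rewrite mdistC.
split.
- by rewrite Ebc; apply: leq_trans HE Hcn.
- apply: Hdl; rewrite /sched_depth /bcast_sched big_allpairs_dep /=.
  apply: (big_ind (fun x => x <= _)) => //; first by move=> x y; rewrite geq_max => ->.
  move=> v _; apply: (big_ind (fun x => x <= _)) => //; first by move=> x y; rewrite geq_max => ->.
  by move=> u _; apply: (brnd_log C Hperm LAr HA Rch RLA).
- by rewrite Erd; apply: leq_trans HE Hcn.
- apply: Hdl; rewrite /sched_depth /reduce_sched big_allpairs_dep /=.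
  apply: (big_ind (fun x => x <= _)) => //; first by move=> x y; rewrite geq_max => ->.
  move=> v _; apply: (big_ind (fun x => x <= _)) => //; first by move=> x y; rewrite geq_max => ->.
  by move=> u _; apply: (rrnd_log Hperm LAr HA Rch RLA).
Qed.
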